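(* Let $\mathbb{H}$ be a finite-dimensional complex Hilbert space with $\dim\mathbb{H}\ge2$, let $n\ge2$ and $k\ge1$ be integers, let $|X\rangle\in\mathbb{H}^{\otimes(nk-1)}$ be a known unit vector, let $\tau_1,\dots,\tau_n\in\mathbb{P}_{nk-1}$, let $c_1,\dots,c_n>0$, and let $|\mu\rangle=\sum_{j=1}^n\alpha_j|j\rangle\in\mathbb{C}^n$ be a unit vector. For unit vectors $|\psi_1\rangle,\dots,|\psi_n\rangle\in\mathbb{H}$ and $j=1,\dots,n$ put $|\Psi^j\rangle=\bigotimes_{t=1}^n|\psi_t\rangle^{\otimes k_{jt}}\in\mathbb{H}^{\otimes(nk-1)}$, where $k_{jt}=k$ for $t\ne j$ and $k_{jj}=k-1$. Then there exists a probabilistic quantum transformation $\mathcal{F}_{\tau_1,\dots,\tau_n}$ from $\mathbb{C}^n\otimes\mathbb{H}^{\otimes nk}$ to $\mathbb{H}$, independent of $\mu$ and the $\psi_t$, such that for all unit vectors $|\psi_1\rangle,\dots,|\psi_n\rangle$ with $|\langle X|S_{\tau_j}|\Psi^j\rangle|^2=c_j$ for $j=1,\dots,n$, one has $$\mathcal{F}_{\tau_1,\dots,\tau_n}\Big(\rho_\mu\otimes\bigotimes_{i=1}^n\rho_{\psi_i}^{\otimes k}\Big)=\rho_\varphi,\qquad|\varphi\rangle\propto\sum_{j=1}^n\alpha_je^{i\theta_j}|\psi_j\rangle,\quad e^{i\theta_j}=\frac{\langle X|S_{\tau_j}|\Psi^j\rangle}{|\langle X|S_{\tau_j}|\Psi^j\rangle|}$$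 (the superposition assumed nonzero).
   Context: $\mathbb{P}_{nk-1}$ is the symmetric group on $\{1,\dots,nk-1\}$; for $g\in\mathbb{P}_{nk-1}$, $S_g$ is the unitary on $\mathbb{H}^{\otimes(nk-1)}$ permuting tensor factors according to $g$. For a unit vector $|\psi\rangle$, $\rho_\psi=|\psi\rangle\langle\psi|$; $|\varphi\rangle\propto|\chi\rangle$ means $|\varphi\rangle$ is the normalization of $|\chi\rangle$ up to a global phase. A probabilistic quantum transformation from $\mathbb{H}_1$ to $\mathbb{H}_2$ is a completely positive, trace-non-increasing linear map from operators on $\mathbb{H}_1$ to operators on $\mathbb{H}_2$; $\mathcal{F}(\rho)=\sigma$ for pure states means $\mathcal{F}(\rho)=p\sigma$ for some $p>0$. *)

(* Defs.v *)
(* Complex scalars: an arbitrary numClosedFieldType C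
   (algebraically closed field with conjugation and order, e.g. algC or C). *)
From HB Require Import structures.
From mathcomp Require Import all_boot all_order all_algebra.
From mathcomp Require Import fingroup perm.
Set Implicit Arguments. Unset Strict Implicit. Unset Printing Implicit Defensive.
Import Order.TTheory GRing.Theory Num.Theory.
Local Open Scope ring_scope.

Section QDefs.
Variable C : numClosedFieldType.

Definition ket (I : finType) := I -> C.
Definition op (I : finType) := I -> I -> C.

Definition normsq (I : finType) (v : ket I) : C := \sum_i `|v i| ^+ 2.
Definition unit_vec (I : finType) (v : ket I) : Prop := normsq v = 1.
Definition braket (I : finType) (u v : ket I) : C := \sum_i (u i)^* * v i.
Definition rho (I : finType) (v : ket I) : op I := fun i j => v i * (v j)^*.
Definition normalize (I : finType) (v : ket I) : ket I :=
  fun i => v i / sqrtC (normsq v).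

Definition trace (I : finType) (A : op I) : C := \sum_i A i i.
Definition psd (I : finType) (A : op I) : Prop :=
  forall v : ket I, 0 <= \sum_i \sum_j (v i)^* * A i j * v j.

Definition linear_map (I J : finType) (F : op I -> op J) : Prop :=
  forall (a : C) (A B : op I) x y,
    F (fun i i' => a * A i i' + B i i') x y = a * F A x y + F B x y.

(* (F (x) id_m) applied to an operator on I (x) C^m *)
Definition ampl (I J : finType) (F : op I -> op J) (m : nat)
  (A : op (prod I 'I_m)) : op (prod J 'I_m) :=
  fun x y => F (fun i i' => A (i, x.2) (i', y.2)) x.1 y.1.

Definition completely_positive (I J : finType) (F : op I -> op J) : Prop :=
  forall (m : nat) (A : op (prod I 'I_m)), psd A -> psd (ampl F A).

Definition trace_non_increasing (I J : finType) (F : op I -> op J) : Prop :=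
  forall A : op I, psd A -> trace (F A) <= trace A.

Definition prob_qtrans (I J : finType) (F : op I -> op J) : Prop :=
  [/\ linear_map F, completely_positive F & trace_non_increasing F].

(* basis of H^{(x) m}, dim H = d *)
Definition tens (d m : nat) := {ffun 'I_m -> 'I_d}.

Definition Sperm (d m : nat) (g : {perm 'I_m}) (v : ket (tens d m)) : ket (tens d m) :=
  fun f => v [ffun p => f (g p)].

(* access psi_t for a nat index t (t is always < n where used) *)
Definition psi_at (d n : nat) (psi : 'I_n -> ket ('I_d)) (t : nat) : 'I_d -> C :=
  fun a => oapp (fun t' : 'I_n => psi t' a) 0 (insub t).

(* owner of slot p (0-based) in Psi^j = (x)_t psi_t^{(x) k_jt}, k_jj = k-1 *)
Definition owner (k j p : nat) : nat := if (p < j * k)%N then (p %/ k)%N else (p.+1 %/ k)%N.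

(* |Psi^j> in H^{(x)(nk-1)} (j 0-based) *)
Definition PsiJ (d n k : nat) (psi : 'I_n -> ket ('I_d)) (j : 'I_n)
  : ket (tens d (n * k - 1)) :=
  fun f => \prod_(p < n * k - 1) psi_at psi (owner k j p) (f p).

Definition input_ket (d n k : nat) (mu : ket ('I_n))
  (psi : 'I_n -> ket ('I_d)) : ket (prod 'I_n (tens d (n * k))) :=
  fun x => mu x.1 * \prod_(p < n * k) psi_at psi (p %/ k) (x.2 p).

End QDefs.

(* Main.v *)
Require Import Defs.
From HB Require Import structures.
From mathcomp Require Import all_boot all_order all_algebra.
From mathcomp Require Import fingroup perm.
From mathcomp Require Import ring zify.
Import Order.TTheory GRing.Theory Num.Theory.
Local Open Scope ring_scope.
Set Implicit Arguments. Unset Strict Implicit.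

Section Quad.
Variable C : numClosedFieldType.
Variable I : finType.
Variable A : op C I.
Definition qf (v : ket C I) : C := \sum_i \sum_j (v i)^* * A i j * v j.

Lemma qf_ext u v : (forall i, u i = v i) -> qf u = qf v.
Proof. move=> h; rewrite /qf; apply eq_bigr => i _; apply eq_bigr => j _; by rewrite !h. Qed.

Lemma qf_par u v : qf (fun i => u i + v i) + qf (fun i => u i - v i) = 2 * qf u + 2 * qf v.
Proof.
rewrite /qf !mulr_sumr -!big_split /=; apply eq_bigr => i _.
rewrite !mulr_sumr -!big_split /=; apply eq_bigr => j _.
rewrite !rmorphD !rmorphN /=; ring.
Qed.

Hypothesis hA : psd A.
Lemma qf_ge0 v : 0 <= qf v. Proof. exact: hA. Qed.

Lemma qf_sub u v : qf (fun i => u i + v i) <= 2 * qf u + 2 * qf v.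
Proof. rewrite -qf_par lerDl; exact: qf_ge0. Qed.

Lemma qf_e (i0 : I) (w : C) : qf (fun b => if b == i0 then w else 0) = `|w| ^+ 2 * A i0 i0.
Proof.
rewrite /qf (bigD1 i0) //= [X in _ + X]big1 => [|a ha]; last first.
  by apply big1 => b _; rewrite (negbTE ha) conjC0 !mul0r.
rewrite addr0 (bigD1 i0) //= [X in _ + X]big1 => [|b hb]; last by rewrite (negbTE hb) mulr0.
rewrite eqxx addr0 normCK; ring.
Qed.

Lemma diag_ge0 i : 0 <= A i i.
Proof. have := qf_ge0 (fun b => if b == i then 1 else 0); by rewrite qf_e normr1 expr1n mul1r. Qed.

Definition wr (w : ket C I) (r : seq I) : ket C I := fun b => if b \in r then w b else 0.

Lemma qf_bound_seq w r : uniq r -> qf (wr w r) <= 2 ^+ size r * \sum_(i <- r) `|w i| ^+ 2 * A i i.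
Proof.
elim: r => [|i r IH] /=.
  move=> _; rewrite big_nil mulr0 /qf big1 // => a _; apply big1 => b _; by rewrite /wr in_nil conjC0 !mul0r.
move=> /andP [ir ur].
have -> : qf (wr w (i :: r)) = qf (fun b => (if b == i then w i else 0) + wr w r b).
  apply qf_ext => b; rewrite /wr in_cons; case: eqP => [->|] /=.
    by rewrite (negbTE ir) addr0.
  by rewrite add0r.
apply: le_trans (qf_sub _ _) _.
rewrite qf_e big_cons.
have t0 : 0 <= `|w i| ^+ 2 * A i i by rewrite mulr_ge0 ?exprn_ge0 ?normr_ge0 ?diag_ge0.
set t := `|w i| ^+ 2 * A i i; set S := \sum_(_ <- _) _.
rewrite [2 ^+ _]exprS -mulrA !mulrDr.
have e1 : 1 <= 2 ^+ size r :> C by rewrite exprn_ege1 // ler1n.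
apply lerD; rewrite ler_pM2l ?ltr0Sn //; last exact: IH.
by rewrite ler_peMl.
Qed.

Lemma qf_bound w : qf w <= 2 ^+ #|I| * \sum_i `|w i| ^+ 2 * A i i.
Proof.
have -> : qf w = qf (wr w (enum I)) by apply qf_ext => b; rewrite /wr mem_enum.
rewrite cardE -big_enum /=; apply qf_bound_seq; apply enum_uniq.
Qed.

Lemma sum3_ex (J K1 K2 : finType) (G : J -> K1 -> K2 -> C) :
  \sum_y \sum_a \sum_b G y a b = \sum_a \sum_b \sum_y G y a b.
Proof. rewrite exchange_big; apply eq_bigr => a _; by rewrite exchange_big. Qed.

Lemma psd_cong (J : finType) (L : J -> I -> C) :
  psd (fun y z => \sum_a \sum_b L y a * A a b * (L z b)^*).
Proof.
move=> v /=.
have -> : \sum_y \sum_z (v y)^* * (\sum_a \sum_b L y a * A a b * (L z b)^*) * v z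
   = qf (fun b => \sum_z (L z b)^* * v z).
  rewrite /qf.
  transitivity (\sum_y \sum_z \sum_a \sum_b (v y)^* * (L y a * A a b * (L z b)^*) * v z).
    apply eq_bigr => y _; apply eq_bigr => z _.
    rewrite mulr_sumr mulr_suml; apply eq_bigr => a _.
    by rewrite mulr_sumr mulr_suml.
  under eq_bigr do rewrite sum3_ex.
  rewrite sum3_ex; apply eq_bigr => a _; apply eq_bigr => b _.
  rewrite rmorph_sum /= mulr_suml mulr_suml; apply eq_bigr => y _.
  rewrite mulr_sumr; apply eq_bigr => z _.
  rewrite rmorphM /= conjCK; ring.
exact: qf_ge0.
Qed.
End Quad.

Section Chan.
Variable C : numClosedFieldType.
Variables I J : finType.

Definition chan (eps : C) (K : J -> I -> C) (A : op C I) : op C J :=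
  fun x y => eps * \sum_a \sum_b K x a * A a b * (K y b)^*.

Lemma chan_lin eps K : linear_map (chan eps K).
Proof.
move=> a A B x y; rewrite /chan.
rewrite !mulr_sumr -big_split /=; apply eq_bigr => i _.
rewrite !mulr_sumr -big_split /=; apply eq_bigr => j _; ring.
Qed.

Lemma psd_scale (T : finType) (B B' : op C T) (eps : C) :
  0 <= eps -> psd B -> (forall x y, B' x y = eps * B x y) -> psd B'.
Proof.
move=> he hB hB' v.
have -> : \sum_i \sum_j (v i)^* * B' i j * v j = eps * \sum_i \sum_j (v i)^* * B i j * v j.
  rewrite mulr_sumr; apply eq_bigr => i _; rewrite mulr_sumr; apply eq_bigr => j _.
  rewrite hB'; ring.
exact: mulr_ge0.
Qed.

Lemma sum_pair_sel (m : nat) (b0 : 'I_m) (H : I -> C) (G : I * 'I_m -> C) :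
  (forall q, G q = if q.2 == b0 then H q.1 else 0) -> \sum_q G q = \sum_b H b.
Proof.
move=> hG; transitivity (\sum_(q : I * 'I_m) (fun a b => G (a, b)) q.1 q.2).
  by apply eq_bigr => -[].
rewrite -(pair_bigA _ (fun a b => G (a, b))) /=; apply eq_bigr => b _.
rewrite (bigD1 b0) //= big1 => [|β hβ]; first by rewrite hG /= eqxx addr0.
by rewrite hG /= (negbTE hβ).
Qed.

Lemma chan_cp eps K : 0 <= eps -> completely_positive (chan eps K).
Proof.
move=> he m A hA.
pose L (x : J * 'I_m) (p : I * 'I_m) := if p.2 == x.2 then K x.1 p.1 else 0.
apply: (psd_scale he (psd_cong hA L)) => x y.
rewrite /ampl /chan; congr (_ * _).
symmetry. apply: (@sum_pair_sel m x.2) => p; rewrite /L.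
case: eqP => [e|_]; last first.
  by rewrite big1 // => q _; rewrite !mul0r.
apply: (@sum_pair_sel m y.2) => q; case: eqP => [e'|_]; last by rewrite conjC0 mulr0.
by case: p e => a α /= ->; case: q e' => b β /= ->.
Qed.

Lemma single_le (T : finType) (F : T -> C) i : (forall j, 0 <= F j) -> F i <= \sum_j F j.
Proof. move=> h; rewrite (bigD1 i) //= lerDl sumr_ge0 // => j _; exact: h. Qed.

Definition Km (K : J -> I -> C) := \sum_x \sum_i `|K x i| ^+ 2.
Definition epsK (K : J -> I -> C) : C := (\sum_(x : J) 2 ^+ #|I| * Km K + 1)^-1.

Lemma epsK_gt0 K : 0 < epsK K.
Proof.
rewrite /epsK invr_gt0 ltr_wpDl // sumr_ge0 // => x _.
by rewrite mulr_ge0 ?exprn_ge0 // sumr_ge0 // => y _; rewrite sumr_ge0 // => i _; rewrite exprn_ge0.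
Qed.

Lemma chan_tni K : trace_non_increasing (chan (epsK K) K).
Proof.
move=> A hA; rewrite /trace /chan.
have Km0 : 0 <= Km K by rewrite sumr_ge0 // => y _; rewrite sumr_ge0 // => i _; rewrite exprn_ge0.
have tr0 : 0 <= \sum_i A i i by rewrite sumr_ge0 // => i _; exact: diag_ge0.
set D := \sum_(x : J) 2 ^+ #|I| * Km K.
have D0 : 0 <= D by rewrite sumr_ge0 // => x _; rewrite mulr_ge0 ?exprn_ge0.
apply: (@le_trans _ _ (\sum_(x : J) epsK K * (2 ^+ #|I| * Km K * \sum_i A i i))).
  apply ler_sum => x _; apply: ler_wpM2l; first exact: ltW (epsK_gt0 K).
  have -> : \sum_a \sum_b K x a * A a b * (K x b)^* = qf A (fun b => (K x b)^*).
    rewrite /qf; apply eq_bigr => a _; apply eq_bigr => b _; by rewrite conjCK.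
  apply: le_trans (qf_bound hA _) _.
  rewrite -mulrA; apply: ler_wpM2l; first exact: exprn_ge0.
  rewrite mulr_sumr; apply: ler_sum => i _.
  apply: ler_wpM2r; first exact: diag_ge0.
  rewrite norm_conjC /Km.
  have h1 := single_le (F:=fun y => \sum_i0 `|K y i0| ^+ 2) x.
  have h2 := single_le (F:=fun j => `|K x j| ^+ 2) i.
  apply: le_trans (h2 _) (h1 _) => [j|y]; first by rewrite exprn_ge0.
  by rewrite sumr_ge0 // => j _; rewrite exprn_ge0.
rewrite -mulr_sumr -mulr_suml -/D mulrA ler_piMl // /epsK -/D.
by rewrite ler_pdivrMl ?ltr_wpDl ?mulr1 ?lerDl // ltr01.
Qed.

Lemma chan_qtrans K : prob_qtrans (chan (epsK K) K).
Proof. split; [exact: chan_lin | apply: chan_cp; exact: ltW (epsK_gt0 K) | exact: chan_tni]. Qed.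
End Chan.

Section Idx.
Local Open Scope nat_scope.
Variables n k : nat.
Hypothesis hn : (2 <= n)%N.
Hypothesis hk : (1 <= k)%N.

Lemma M_gt0 : (0 < n * k - 1)%N.
Proof. have : (2 * 1 <= n * k)%N by rewrite leq_mul. lia. Qed.
Definition p0 : 'I_(n * k - 1) := Ordinal M_gt0.

Lemma s_lt (j : 'I_n) : (j * k < n * k)%N.
Proof. by rewrite ltn_pmul2r. Qed.
Definition sj (j : 'I_n) : 'I_(n * k) := Ordinal (s_lt j).

Lemma E_lt (j : 'I_n) (p : 'I_(n * k - 1)) : (bump (j * k) p < n * k)%N.
Proof. rewrite /bump; case: (leqP (j * k) p) => h /=; have := ltn_ord p; lia. Qed.
Definition E (j : 'I_n) (p : 'I_(n * k - 1)) : 'I_(n * k) := Ordinal (E_lt j p).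
Definition Einv (j : 'I_n) (q : 'I_(n * k)) : 'I_(n * k - 1) := insubd p0 (unbump (j * k) q).

Lemma E_neq j p : E j p != sj j.
Proof. apply/eqP => /(congr1 val) /= e; move: (neq_bump (j * k) p); by rewrite e eqxx. Qed.

Lemma EK j p : Einv j (E j p) = p.
Proof. by apply val_inj; rewrite /Einv val_insubd /= bumpK ltn_ord. Qed.

Lemma EinvK j q : q != sj j -> E j (Einv j q) = q.
Proof.
move=> hq; apply val_inj => /=.
have hq' : (val q != j * k)%N by apply: contra hq => /eqP e; apply/eqP; apply val_inj.
rewrite val_insubd.
have -> : (unbump (j * k) q < n * k - 1)%N.
  have := ltn_ord q; have := s_lt j; move: hq'; rewrite /unbump.
  case: ltnP => /= h1 h2 h3 h4; lia.
by rewrite unbumpKcond (negbTE hq').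
Qed.

Lemma owner_E (j : 'I_n) (p : 'I_(n * k - 1)) : owner k j p = (E j p %/ k)%N.
Proof. rewrite /owner /= /bump; case: (ltnP p (j * k)) => h /=; by rewrite ?add0n ?add1n. Qed.

Lemma sj_div (j : 'I_n) : (sj j %/ k)%N = j.
Proof. by rewrite /= mulnK. Qed.

Local Open Scope ring_scope.
Variable C : numClosedFieldType.
Variable d : nat.
Variable X : ket C (tens d (n * k - 1)).
Variable tau : 'I_n -> {perm 'I_(n * k - 1)}.
Variable psi : 'I_n -> ket C ('I_d).

Definition hf (j : 'I_n) (f : tens d (n * k)) : tens d (n * k - 1) :=
  [ffun q => f (E j (((tau j)^-1)%g q))].
Definition f0 (j : 'I_n) (x : 'I_d) (h : tens d (n * k - 1)) : tens d (n * k) :=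
  [ffun p => if p == sj j then x else h (tau j (Einv j p))].

Lemma f0_sj j x h : f0 j x h (sj j) = x.
Proof. by rewrite /f0 ffunE eqxx. Qed.
Lemma f0_ne j x h p : p != sj j -> f0 j x h p = h (tau j (Einv j p)).
Proof. by move=> hp; rewrite /f0 ffunE (negbTE hp). Qed.

Lemma hf_f0 j x h : hf j (f0 j x h) = h.
Proof. by apply/ffunP => q; rewrite !ffunE (negbTE (E_neq _ _)) EK permKV. Qed.

Lemma f0_hf (j : 'I_n) (x : 'I_d) (f : tens d (n * k)) : f (sj j) == x -> f0 j x (hf j f) = f.
Proof.
move=> /eqP hx; apply/ffunP => p; rewrite !ffunE.
case: eqP => [->|/eqP hp]; first by rewrite hx.
by rewrite permK EinvK.
Qed.

Lemma psi_at_val (j : 'I_n) a : psi_at psi j a = psi j a.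
Proof. by rewrite /psi_at valK. Qed.

Lemma key (j : 'I_n) (x : 'I_d) :
  \sum_(f : tens d (n * k)) (if f (sj j) == x then (X (hf j f))^* else 0) *
      \prod_(p < n * k) psi_at psi (p %/ k) (f p)
  = psi j x * \sum_h (X h)^* * PsiJ psi j [ffun p => h (tau j p)].
Proof.
transitivity (\sum_(f : tens d (n * k) | f (sj j) == x) (X (hf j f))^* * \prod_(p < n * k) psi_at psi (p %/ k) (f p)).
  rewrite [RHS]big_mkcond; apply eq_bigr => f _; by case: ifP => _; rewrite ?mul0r.
rewrite (reindex_onto (f0 j x) (hf j)) /=; last exact: f0_hf.
rewrite mulr_sumr; apply: eq_big => [h|h _].
  by rewrite f0_sj eqxx hf_f0 eqxx.
rewrite hf_f0 mulrCA; congr (_ * _).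
rewrite (bigD1 (sj j)) //= f0_sj sj_div psi_at_val; congr (_ * _).
rewrite (reindex_onto (E j) (Einv j)) /=; last exact: EinvK.
rewrite /PsiJ; apply: eq_big => [p|p _].
  by rewrite E_neq EK eqxx.
by rewrite /f0 !ffunE (negbTE (E_neq j p)) EK owner_E.
Qed.

Variable c : 'I_n -> C.
Definition Kop (x : 'I_d) (a : 'I_n * tens d (n * k)) : C :=
  if a.2 (sj a.1) == x then (X (hf a.1 a.2))^* / sqrtC (c a.1) else 0.

Lemma Kv (mu : ket C 'I_n) (x : 'I_d) :
  \sum_a Kop x a * input_ket mu psi a =
  \sum_j mu j / sqrtC (c j) * (psi j x * \sum_h (X h)^* * PsiJ psi j [ffun p => h (tau j p)]).
Proof.
transitivity (\sum_(a : 'I_n * tens d (n * k)) (fun j f => Kop x (j, f) * input_ket mu psi (j, f)) a.1 a.2).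
  by apply eq_bigr => -[].
rewrite -(pair_bigA _ (fun j f => Kop x (j, f) * input_ket mu psi (j, f))) /=.
apply eq_bigr => j _; rewrite -key mulr_sumr; apply eq_bigr => f _.
rewrite /Kop /input_ket /=; case: ifP => _; ring.
Qed.
End Idx.

Theorem corollary4 (C : numClosedFieldType) (d n k : nat)
  (hd : (2 <= d)%N) (hn : (2 <= n)%N) (hk : (1 <= k)%N)
  (X : ket C (tens d (n * k - 1))) (hX : unit_vec X)
  (tau : 'I_n -> {perm 'I_(n * k - 1)})
  (c : 'I_n -> C) (hc : forall j, 0 < c j) :
  exists F : op C (prod 'I_n (tens d (n * k))) -> op C ('I_d),
    prob_qtrans F /\
    forall (mu : ket C ('I_n)) (psi : 'I_n -> ket C ('I_d)),
      unit_vec mu ->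
      (forall t, unit_vec (psi t)) ->
      (forall j, `|braket X (Sperm (tau j) (PsiJ psi j))| ^+ 2 = c j) ->
      let amp j := braket X (Sperm (tau j) (PsiJ psi j)) in
      let chi : ket C ('I_d) :=
        fun a => \sum_(j < n) mu j * (amp j / `|amp j|) * psi j a in
      (exists a, chi a != 0) ->
      exists p : C, 0 < p /\
        forall x y, F (rho (@input_ket C d n k mu psi)) x y = p * rho (normalize chi) x y.
Proof.
set K := Kop hn hk X tau c.
exists (chan (epsK K) K); split; first exact: chan_qtrans.
move=> mu psi _ _ hcj amp chi [a ha].
have hamp j : `|amp j| = sqrtC (c j) by rewrite -hcj sqrCK ?normr_ge0.
have hK x : \sum_i K x i * input_ket mu psi i = chi x.
  rewrite /K Kv /chi; apply eq_bigr => j _; rewrite hamp /amp /braket /Sperm; ring.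
set Nc := normsq chi.
have Nc0 : 0 < Nc.
  rewrite /Nc /normsq (bigD1 a) //= ltr_wpDr ?sumr_ge0 // => [i _|]; first exact: exprn_ge0.
  by rewrite exprn_gt0 // normr_gt0.
set s := sqrtC Nc.
have s0 : s != 0 by rewrite /s sqrtC_eq0 gt_eqF.
have sc : s^* = s by rewrite geC0_conj // sqrtC_ge0 ltW.
have ss : Nc = s ^+ 2 by rewrite /s sqrtCK.
exists (epsK K * Nc); split; first by rewrite mulr_gt0 ?epsK_gt0.
move=> x y; rewrite /chan /rho /normalize -/Nc -/s.
transitivity (epsK K * ((\sum_i K x i * input_ket mu psi i) * (\sum_i K y i * input_ket mu psi i)^*)).
  congr (_ * _); rewrite rmorph_sum /= mulr_suml; apply eq_bigr => i _.
  rewrite mulr_sumr; apply eq_bigr => i' _; rewrite [(K y i' * _)^*]rmorphM /=; ring.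
rewrite !hK rmorphM /= fmorphV /= sc ss; field.
exact: s0.
Qed.
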